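(* Consider the generalized one-way trading problem (GOT) with capacity $C$ and bounds $0<L\le U$, under Assumption A. If there exists an $\alpha$-competitive online algorithm for GOT, then there exists a non-decreasing function $\psi:[L,U]\to[0,C]$ satisfying $$L\psi(L)+\int_L^p u\,d\psi(u)\ge \frac{pC}{\alpha}\ \ \text{for all }p\in[L,U],\qquad \psi(L)\ge \frac{C}{\alpha},\qquad \psi(U)\le C,$$ where the integral is a Riemann–Stieltjes integral.
   Context: GOT: a single knapsack of capacity $C$; items $n=1,\dots,N$ arrive one at a time; item $n$ has size $D_n>0$ and value function $g_n:[0,D_n]\to\mathbb R_{\ge0}$, revealed on arrival. Offline problem: $\max\sum_n g_n(y_n)$ s.t. $\sum_n y_n\le C$, $0\le y_n\le D_n$. Assumption A: each $g_n$ is non-decreasing, differentiable, concave, $g_n(0)=0$, $L\le g_n'\le U$, with $C,L,U$ known. An online algorithm irrevocably chooses $y_n$ on arrival of item $n$ using only items $1,\dots,n$ and $C,L,U$, keeping the constraints feasible; it is $\alpha$-competitive if $\mathrm{OPT}(\mathcal I)\le\alpha\,\mathrm{ALG}(\mathcal I)$ for every instance $\mathcal I$ satisfying Assumption A. *)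

(* Defs.v *)
From Stdlib Require Import Reals Lra List.
Open Scope R_scope.

Fixpoint sumR (n : nat) (f : nat -> R) : R :=
  match n with O => 0 | S k => sumR k f + f k end.

(* An item: (size D_n, value function g_n).  An instance is a list of items,
   in arrival order; N = length of the list. *)
Definition item := (R * (R -> R))%type.
Definition instance := list item.
Definition default_item : item := (0, fun _ => 0).
Definition size_of (I : instance) (n : nat) : R := fst (nth n I default_item).
Definition val_of (I : instance) (n : nat) : R -> R := snd (nth n I default_item).

Definition has_deriv_on (g g' : R -> R) (D : R) : Prop :=
  forall y, 0 <= y <= D ->
  forall eps, 0 < eps -> exists delta, 0 < delta /\
    forall z, 0 <= z <= D -> z <> y -> Rabs (z - y) < delta ->
      Rabs ((g z - g y) / (z - y) - g' y) < eps.

Definition assumptionA_item (L U : R) (it : item) : Prop :=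
  let D := fst it in let g := snd it in
  0 < D /\
  g 0 = 0 /\
  (forall x y, 0 <= x -> x <= y -> y <= D -> g x <= g y) /\
  (forall x y t, 0 <= x <= D -> 0 <= y <= D -> 0 <= t <= 1 ->
      t * g x + (1 - t) * g y <= g (t * x + (1 - t) * y)) /\
  (exists g' : R -> R, has_deriv_on g g' D /\
      forall y, 0 <= y <= D -> L <= g' y <= U).

Definition assumptionA (L U : R) (I : instance) : Prop :=
  forall it, In it I -> assumptionA_item L U it.

Definition feasible (C : R) (I : instance) (y : nat -> R) : Prop :=
  (forall n, (n < length I)%nat -> 0 <= y n <= size_of I n) /\
  sumR (length I) y <= C.

Definition objective (I : instance) (y : nat -> R) : R :=
  sumR (length I) (fun n => val_of I n (y n)).

(* A deterministic online algorithm (for fixed known C, L, U): on arrival of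
   item n it sees the items 1..n (the prefix of length n+1) and returns y_n.
   Irrevocability and the online information constraint are built in. *)
Definition online_alg := instance -> R.

Definition alg_decisions (A : online_alg) (I : instance) : nat -> R :=
  fun n => A (firstn (S n) I).

Definition ALG (A : online_alg) (I : instance) : R := objective I (alg_decisions A I).

(* alpha-competitive: always feasible on instances satisfying Assumption A, and
   OPT(I) <= alpha * ALG(I), where OPT(I) = sup of objective over feasible y
   (stated as: every feasible y has objective <= alpha * ALG(I)). *)
Definition competitive (C L U alpha : R) (A : online_alg) : Prop :=
  (forall I, assumptionA L U I -> feasible C I (alg_decisions A I)) /\
  (forall I, assumptionA L U I ->
     forall y, feasible C I y -> objective I y <= alpha * ALG A I).

Definition tagged_partition (a b : R) (n : nat) (x t : nat -> R) : Prop :=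
  x O = a /\ x n = b /\
  forall i, (i < n)%nat -> x i <= t i <= x (S i).

Definition RS_sum (f psi : R -> R) (n : nat) (x t : nat -> R) : R :=
  sumR n (fun i => f (t i) * (psi (x (S i)) - psi (x i))).

Definition is_RS_integral (f psi : R -> R) (a b I : R) : Prop :=
  forall eps, 0 < eps -> exists delta, 0 < delta /\
    forall n x t, tagged_partition a b n x t ->
      (forall i, (i < n)%nat -> x (S i) - x i < delta) ->
      Rabs (RS_sum f psi n x t - I) < eps.

(* Main.v *)
Require Import Defs.
From Stdlib Require Import Reals Lra List Lia.
Open Scope R_scope.

Lemma Rdiv_le_0_compat a b : 0 <= a -> 0 < b -> 0 <= a / b.
Proof. intros. unfold Rdiv. apply Rmult_le_pos; [lra|]. left; apply Rinv_0_lt_compat; lra. Qed.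

Lemma ln_le x y : 0 < x -> x <= y -> ln x <= ln y.
Proof.
  intros Hx Hxy. destruct (Rle_lt_or_eq_dec x y Hxy) as [H|H].
  - left. apply ln_increasing; assumption.
  - subst; lra.
Qed.

Lemma ln_le_xm1 x : 0 < x -> ln x <= x - 1.
Proof.
  intros Hx. rewrite <- (ln_exp (x - 1)).
  apply ln_le; [exact Hx|]. pose proof (exp_ineq1_le (x - 1)). lra.
Qed.

Lemma ln_diff_le a b : 0 < a -> 0 < b -> ln b - ln a <= b / a - 1.
Proof.
  intros Ha Hb.
  assert (Hq : 0 < b / a) by (apply Rdiv_lt_0_compat; lra).
  replace b with (a * (b / a)) at 1 by (field; lra).
  rewrite ln_mult by lra. pose proof (ln_le_xm1 _ Hq). lra.
Qed.

Lemma sumR_ext n f g : (forall i, (i < n)%nat -> f i = g i) -> sumR n f = sumR n g.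
Proof.
  induction n; simpl; intros H; [reflexivity|].
  rewrite IHn by (intros; apply H; lia). rewrite H by lia. reflexivity.
Qed.

Lemma firstn_seq0 a b : firstn a (seq 0 b) = seq 0 (Nat.min a b).
Proof.
  revert b. generalize 0%nat as s. induction a; intros s b; simpl; [reflexivity|].
  destruct b; simpl; [reflexivity|]. f_equal. apply IHa.
Qed.

Section RS.
Variables (c L : R) (hc : 0 < c) (hL : 0 < L).
Definition psi0 (u : R) := c * (1 + ln u - ln L).

Lemma part_mono n (x t : nat -> R) :
  (forall i, (i < n)%nat -> x i <= t i <= x (S i)) ->
  forall i, (i <= n)%nat -> x O <= x i.
Proof.
  intros H i. induction i; intros Hi; [lra|].
  pose proof (H i ltac:(lia)). pose proof (IHi ltac:(lia)). lra.
Qed.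

Lemma term_bound a b t : L <= a -> a <= t <= b ->
  - ((b - a) * (b - a) / L) <= t * (ln b - ln a) - (b - a) <= (b - a) * (b - a) / L.
Proof.
  intros Ha Ht.
  assert (H1 : ln b - ln a <= b / a - 1) by (apply ln_diff_le; lra).
  assert (H2 : ln a - ln b <= a / b - 1) by (apply ln_diff_le; lra).
  assert (Hd0 : 0 <= ln b - ln a) by (pose proof (ln_le a b ltac:(lra) ltac:(lra)); lra).
  remember (ln b - ln a) as d eqn:Hdd.
  assert (E1 : b / a - 1 = (b - a) / a) by (field; lra).
  assert (E2 : a / b - 1 = - ((b - a) / b)) by (field; lra).
  assert (Hba : 0 <= b - a) by lra.
  split.
  - (* t d >= a d >= a (b-a)/b = (b-a) - (b-a)^2/b >= (b-a) - (b-a)^2/L *)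
    assert (a * d >= a * ((b - a) / b)) by (apply Rle_ge, Rmult_le_compat_l; lra).
    assert (a * ((b - a) / b) = (b - a) - (b - a) * (b - a) / b) by (field; lra).
    assert ((b - a) * (b - a) / b <= (b - a) * (b - a) / L).
    { unfold Rdiv. apply Rmult_le_compat_l; [nra|]. apply Rinv_le_contravar; lra. }
    assert (t * d >= a * d) by (apply Rle_ge, Rmult_le_compat_r; lra).
    lra.
  - assert (b * d <= b * ((b - a) / a)) by (apply Rmult_le_compat_l; lra).
    assert (b * ((b - a) / a) = (b - a) + (b - a) * (b - a) / a) by (field; lra).
    assert ((b - a) * (b - a) / a <= (b - a) * (b - a) / L).
    { unfold Rdiv. apply Rmult_le_compat_l; [nra|]. apply Rinv_le_contravar; lra. }
    assert (t * d <= b * d) by (apply Rmult_le_compat_r; lra).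
    lra.
Qed.

Lemma RS_err n (x t : nat -> R) delta :
  0 < delta -> x O = L ->
  (forall i, (i < n)%nat -> x i <= t i <= x (S i)) ->
  (forall i, (i < n)%nat -> x (S i) - x i < delta) ->
  - (delta / L * (x n - x O)) <= sumR n (fun i => t i * (ln (x (S i)) - ln (x i))) - (x n - x O)
  <= delta / L * (x n - x O).
Proof.
  intros Hd Hx0 Hp Hm. induction n; simpl.
  - replace (delta / L * (x O - x O)) with 0 by ring. lra.
  - assert (IH := IHn ltac:(intros; apply Hp; lia) ltac:(intros; apply Hm; lia)).
    assert (Hxn : L <= x n) by (rewrite <- Hx0; apply (part_mono (S n) x t Hp); lia).
    pose proof (Hp n ltac:(lia)). pose proof (Hm n ltac:(lia)).
    pose proof (term_bound (x n) (x (S n)) (t n) Hxn ltac:(lra)).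
    assert ((x (S n) - x n) * (x (S n) - x n) / L <= delta / L * (x (S n) - x n)).
    { unfold Rdiv. assert (0 < / L) by (apply Rinv_0_lt_compat; lra).
      assert (0 <= x (S n) - x n) by lra.
      assert ((x (S n) - x n) * (x (S n) - x n) <= delta * (x (S n) - x n)) by nra.
      nra. }
    replace (delta / L * (x (S n) - x O)) with
      (delta / L * (x n - x O) + delta / L * (x (S n) - x n)) by ring.
    lra.
Qed.

Lemma RS_psi0 p : L <= p -> is_RS_integral (fun u => u) psi0 L p (c * (p - L)).
Proof.
  intros Hp eps He.
  set (delta := eps * L / (c * (p - L + 1))).
  assert (Hdp : 0 < delta).
  { unfold delta. apply Rdiv_lt_0_compat; [nra|]. apply Rmult_lt_0_compat; lra. }
  exists delta. split; [exact Hdp|].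
  intros n x t [Hx0 [Hxn Hp']] Hm.
  assert (E : RS_sum (fun u => u) psi0 n x t =
              c * sumR n (fun i => t i * (ln (x (S i)) - ln (x i)))).
  { unfold RS_sum, psi0. clear. induction n; simpl; [ring|]. rewrite IHn. ring. }
  rewrite E.
  pose proof (RS_err n x t delta Hdp Hx0 Hp' Hm) as H.
  rewrite Hxn, Hx0 in H.
  assert (Hk : c * (delta / L * (p - L)) < eps).
  { unfold delta. replace (c * (eps * L / (c * (p - L + 1)) / L * (p - L)))
      with (eps * ((p - L) / (p - L + 1))) by (field; lra).
    assert ((p - L) / (p - L + 1) < 1).
    { apply (Rmult_lt_reg_r (p - L + 1)); [lra|]. unfold Rdiv.
      rewrite Rmult_assoc, Rinv_l by lra. lra. }
    nra. }
  set (S := sumR n (fun i => t i * (ln (x (S i)) - ln (x i)))) in *.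
  set (K := delta / L * (p - L)) in *.
  apply Rabs_def1; nra.
Qed.
End RS.

Section LB.
Variables (C L U alpha : R) (hC : 0 < C) (hL : 0 < L) (hLU : L <= U).
Variable (A : online_alg).
Variable (m : nat) (hm : (0 < m)%nat).

Definition hh := (U - L) / INR m.
Definition vv (k : nat) := L + INR k * hh.
Definition itm (k : nat) : item := (C, fun y => vv k * y).
Definition inst (n : nat) : instance := map itm (seq 0 n).
Definition aa (k : nat) := A (inst (S k)).

Lemma hh_nonneg : 0 <= hh.
Proof.
  unfold hh. apply Rdiv_le_0_compat; [lra|]. apply lt_0_INR; lia.
Qed.

Lemma vv_ge k : L <= vv k.
Proof. unfold vv. pose proof hh_nonneg. pose proof (pos_INR k). nra. Qed.

Lemma vv_le k : (k <= m)%nat -> vv k <= U.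
Proof.
  intros Hk. unfold vv, hh. pose proof (le_INR _ _ Hk). pose proof (lt_0_INR m ltac:(lia)).
  replace (INR k * ((U - L) / INR m)) with ((U - L) * (INR k / INR m)) by (field; lra).
  assert (INR k / INR m <= 1).
  { apply (Rmult_le_reg_r (INR m)); [lra|]. unfold Rdiv.
    rewrite Rmult_assoc, Rinv_l by lra. lra. }
  assert (0 <= INR k / INR m) by (apply Rdiv_le_0_compat; [apply pos_INR|lra]).
  nra.
Qed.

Lemma vv_m : vv m = U.
Proof. unfold vv, hh. pose proof (lt_0_INR m ltac:(lia)). field. lra. Qed.
Lemma vv_0 : vv 0 = L.
Proof. unfold vv. simpl. ring. Qed.
Lemma vv_S k : vv (S k) = vv k + hh.
Proof. unfold vv. rewrite S_INR. ring. Qed.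

Lemma inst_len n : length (inst n) = n.
Proof. unfold inst. rewrite length_map, length_seq. reflexivity. Qed.

Lemma inst_nth n j : (j < n)%nat -> nth j (inst n) default_item = itm j.
Proof.
  intros Hj. rewrite nth_indep with (d' := itm 0) by (rewrite inst_len; lia).
  unfold inst. rewrite map_nth, seq_nth by lia. reflexivity.
Qed.

Lemma inst_firstn j n : (j <= n)%nat -> firstn j (inst n) = inst j.
Proof.
  intros H. unfold inst. rewrite firstn_map, firstn_seq0. f_equal. f_equal. lia.
Qed.

Lemma inst_A n : (n <= S m)%nat -> assumptionA L U (inst n).
Proof.
  intros Hn it Hin. unfold inst in Hin. apply in_map_iff in Hin.
  destruct Hin as [k [Hk Hin]]. apply in_seq in Hin. subst it.
  pose proof (vv_ge k). pose proof (vv_le k ltac:(lia)).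
  unfold assumptionA_item, itm; simpl. repeat split.
  - exact hC.
  - ring.
  - intros x y Hx Hxy Hy. nra.
  - intros x y t _ _ _. nra.
  - exists (fun _ => vv k). split.
    + intros y Hy eps He. exists 1. split; [lra|]. intros z Hz Hzy _.
      replace ((vv k * z - vv k * y) / (z - y) - vv k) with 0.
      * rewrite Rabs_R0. exact He.
      * field. intro. apply Hzy. lra.
    + intros; lra.
Qed.

Lemma alg_dec n j : (j < n)%nat -> alg_decisions A (inst n) j = aa j.
Proof. intros H. unfold alg_decisions, aa. rewrite inst_firstn by lia. reflexivity. Qed.

Definition TT k := sumR (S k) (fun j => vv j * aa j).
Definition SS k := sumR (S k) aa.

Lemma ALG_inst k : ALG A (inst (S k)) = TT k.
Proof.
  unfold ALG, objective, TT. rewrite inst_len. apply sumR_ext. intros i Hi.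
  rewrite alg_dec by lia. unfold val_of. rewrite inst_nth by lia. reflexivity.
Qed.

Hypothesis hcomp : competitive C L U alpha A.

Lemma H_feas : SS m <= C /\ forall j, (j <= m)%nat -> 0 <= aa j.
Proof.
  destruct hcomp as [Hf _]. destruct (Hf (inst (S m)) (inst_A (S m) ltac:(lia))) as [H1 H2].
  rewrite inst_len in H1, H2. split.
  - unfold SS. rewrite <- (sumR_ext (S m) (alg_decisions A (inst (S m)))); [exact H2|].
    intros; apply alg_dec; lia.
  - intros j Hj. rewrite <- alg_dec with (n := S m) by lia. apply H1; lia.
Qed.

Lemma H_opt k : (k <= m)%nat -> vv k * C <= alpha * TT k.
Proof.
  intros Hk. destruct hcomp as [_ Ho].
  set (y := fun n => if Nat.eqb n k then C else 0).
  assert (Hy0 : sumR k y = 0).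
  { rewrite (sumR_ext k y (fun _ => 0)).
    - clear. induction k; simpl; [reflexivity|]. rewrite IHk. ring.
    - intros i Hi. unfold y. replace (Nat.eqb i k) with false; [reflexivity|].
      symmetry. apply Nat.eqb_neq. lia. }
  assert (Hyk : y k = C) by (unfold y; rewrite Nat.eqb_refl; reflexivity).
  assert (Hfe : feasible C (inst (S k)) y).
  { split; rewrite inst_len.
    - intros n Hn. unfold size_of. rewrite inst_nth by lia. simpl. unfold y.
      destruct (Nat.eqb n k); lra.
    - simpl. rewrite Hy0, Hyk. lra. }
  pose proof (Ho (inst (S k)) (inst_A (S k) ltac:(lia)) y Hfe) as H.
  rewrite ALG_inst in H. unfold objective in H. rewrite inst_len in H. simpl in H.
  unfold val_of at 2 in H. rewrite inst_nth in H by lia. simpl in H. rewrite Hyk in H.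
  assert (Hz : sumR k (fun n => val_of (inst (S k)) n (y n)) = 0).
  { rewrite (sumR_ext k _ (fun _ => 0)).
    - clear. induction k; simpl; [reflexivity|]. rewrite IHk. ring.
    - intros i Hi. unfold val_of. rewrite inst_nth by lia. simpl. unfold y.
      replace (Nat.eqb i k) with false by (symmetry; apply Nat.eqb_neq; lia). ring. }
  rewrite Hz in H. lra.
Qed.

Lemma alpha_pos : 0 < alpha.
Proof.
  pose proof (H_opt 0 ltac:(lia)). destruct H_feas as [_ H0].
  pose proof (H0 0%nat ltac:(lia)). unfold TT in H. simpl in H.
  rewrite vv_0 in H. destruct (Rle_lt_dec alpha 0); [|assumption].
  assert (0 <= (- alpha) * (L * aa 0)) by (apply Rmult_le_pos; [lra|apply Rmult_le_pos; lra]). assert (0 < L * C) by (apply Rmult_lt_0_compat; lra). lra.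
Qed.

Definition XX k := sumR k (fun i => 1 - vv i / vv (S i)).

Lemma induct k : (k <= m)%nat -> alpha * SS k >= alpha * TT k / vv k + C * XX k.
Proof.
  induction k; intros Hk.
  - unfold SS, TT, XX. simpl. pose proof (vv_ge 0). field_simplify; lra.
  - pose proof (IHk ltac:(lia)) as IH.
    pose proof (H_opt k ltac:(lia)) as Ho.
    pose proof (vv_ge k). pose proof (vv_ge (S k)). pose proof (vv_S k). pose proof hh_nonneg.
    assert (ES : SS (S k) = SS k + aa (S k)) by reflexivity.
    assert (ET : TT (S k) = TT k + vv (S k) * aa (S k)) by reflexivity.
    assert (EX : XX (S k) = XX k + (1 - vv k / vv (S k))) by reflexivity.
    assert (Hinv : 0 <= / vv k - / vv (S k)).
    { assert (/ vv (S k) <= / vv k) by (apply Rinv_le_contravar; lra); lra. }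
    assert (Hp : 0 <= (alpha * TT k - vv k * C) * (/ vv k - / vv (S k))).
    { apply Rmult_le_pos; lra. }
    assert (Eq1 : (alpha * TT k - vv k * C) * (/ vv k - / vv (S k)) =
       alpha * TT k / vv k - alpha * TT k / vv (S k) - C + C * (vv k / vv (S k))) by (field; lra).
    assert (Eq2 : alpha * TT (S k) / vv (S k) = alpha * TT k / vv (S k) + alpha * aa (S k)).
    { rewrite ET. field. lra. }
    rewrite ES, EX, Eq2. lra.
Qed.

Lemma XX_bound k : XX k >= ln (vv k) - ln L - INR k * (hh * hh / (L * L)).
Proof.
  induction k.
  - unfold XX. simpl. rewrite vv_0. lra.
  - assert (XX (S k) = XX k + (1 - vv k / vv (S k))) by reflexivity.
    pose proof (vv_ge k). pose proof (vv_ge (S k)). pose proof (vv_S k). pose proof hh_nonneg.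
    pose proof (ln_diff_le (vv k) (vv (S k)) ltac:(lra) ltac:(lra)).
    assert (E1 : vv (S k) / vv k - 1 = hh / vv k) by (rewrite H2; field; lra).
    assert (E2 : 1 - vv k / vv (S k) = hh / vv (S k)) by (rewrite H2; field; lra).
    assert (E3 : hh / vv k - hh / vv (S k) = hh * hh / (vv k * vv (S k))) by (rewrite H2; field; lra).
    assert (hh * hh / (vv k * vv (S k)) <= hh * hh / (L * L)).
    { unfold Rdiv. apply Rmult_le_compat_l; [nra|]. apply Rinv_le_contravar; nra. }
    rewrite S_INR. lra.
Qed.

Lemma alpha_bound_m : alpha >= 1 + (ln U - ln L) - (U - L) * (U - L) / (L * L) / INR m.
Proof.
  pose proof (induct m ltac:(lia)) as H. destruct H_feas as [Hs _].
  pose proof (H_opt m ltac:(lia)) as Ho. pose proof alpha_pos.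
  pose proof (vv_ge m). rewrite vv_m in *.
  assert (alpha * TT m / U >= C).
  { apply Rle_ge. apply (Rmult_le_reg_r U); [lra|]. unfold Rdiv.
    rewrite Rmult_assoc, Rinv_l by lra. lra. }
  assert (alpha * SS m <= alpha * C) by (apply Rmult_le_compat_l; lra).
  assert (Hx : alpha >= 1 + XX m).
  { assert (C * alpha >= C * (1 + XX m)) by lra.
    apply Rle_ge. apply (Rmult_le_reg_l C); lra. }
  pose proof (XX_bound m). rewrite vv_m in H4.
  assert (INR m * (hh * hh / (L * L)) = (U - L) * (U - L) / (L * L) / INR m).
  { unfold hh. pose proof (lt_0_INR m ltac:(lia)). field. split; lra. }
  lra.
Qed.
End LB.

Lemma alpha_bound C L U alpha A : 0 < C -> 0 < L -> L <= U ->
  competitive C L U alpha A -> 0 < alpha /\ alpha >= 1 + (ln U - ln L).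
Proof.
  intros hC hL hLU Hc. split.
  - exact (alpha_pos C L U alpha hC hL hLU A 1 ltac:(lia) Hc).
  - set (K := (U - L) * (U - L) / (L * L)).
    assert (HK : 0 <= K) by (unfold K; apply Rdiv_le_0_compat; nra).
    destruct (Rge_or_gt alpha (1 + (ln U - ln L))) as [|Hlt]; [assumption|exfalso].
    set (e := 1 + (ln U - ln L) - alpha).
    assert (He : 0 < e / (K + 1)) by (apply Rdiv_lt_0_compat; unfold e; lra).
    destruct (archimed_cor1 _ He) as [N [HN HN0]].
    pose proof (alpha_bound_m C L U alpha hC hL hLU A N HN0 Hc) as Hb. fold K in Hb.
    pose proof (lt_0_INR N ltac:(lia)).
    assert (K / INR N < e).
    { assert (K / INR N <= (K + 1) * / INR N).
      { unfold Rdiv. apply Rmult_le_compat_r; [left; apply Rinv_0_lt_compat; lra|lra]. }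
      assert (HH : (K + 1) * / INR N < (K + 1) * (e / (K + 1))) by (apply Rmult_lt_compat_l; lra).
      replace ((K + 1) * (e / (K + 1))) with e in HH by (field; lra). lra. }
    unfold e in *. lra.
Qed.

Theorem lemma2 (C L U alpha : R) (hC : 0 < C) (hL : 0 < L) (hLU : L <= U) :
  (exists A : online_alg, competitive C L U alpha A) ->
  exists psi : R -> R,
    (forall x y, L <= x -> x <= y -> y <= U -> psi x <= psi y) /\
    (forall u, L <= u <= U -> 0 <= psi u <= C) /\
    (forall p, L <= p <= U ->
       exists I, is_RS_integral (fun u => u) psi L p I /\
                 L * psi L + I >= p * C / alpha) /\
    psi L >= C / alpha /\
    psi U <= C.
Proof.
  intros [A Hc]. destruct (alpha_bound C L U alpha A hC hL hLU Hc) as [Ha Hb].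
  set (c := C / alpha).
  assert (Hcp : 0 < c) by (apply Rdiv_lt_0_compat; lra).
  assert (HcU : c * (1 + ln U - ln L) <= C).
  { unfold c. apply (Rmult_le_reg_r alpha); [lra|].
    replace (C / alpha * (1 + ln U - ln L) * alpha) with (C * (1 + ln U - ln L)) by (field; lra).
    apply Rmult_le_compat_l; lra. }
  exists (psi0 c L). unfold psi0. split; [|split; [|split; [|split]]].
  - intros x y Hx Hxy Hy. apply Rmult_le_compat_l; [lra|].
    pose proof (ln_le x y ltac:(lra) Hxy). lra.
  - intros u [Hu1 Hu2]. split.
    + pose proof (ln_le L u hL Hu1). nra.
    + pose proof (ln_le u U ltac:(lra) Hu2).
      assert (c * (1 + ln u - ln L) <= c * (1 + ln U - ln L)) by (apply Rmult_le_compat_l; lra).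
      lra.
  - intros p [Hp1 Hp2]. exists (c * (p - L)). split.
    + apply RS_psi0; lra.
    + unfold c. apply Req_ge. field. lra.
  - apply Req_ge. unfold c. ring.
  - exact HcU.
Qed.
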